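(* Let $X$ be a non-empty finite set and $\mathcal{P}=\{P_1,\ldots,P_n\}$ a partition of $X$ indexed so that $|P_i|\le|P_{i+1}|$, with distinct block sizes $l_1<\cdots<l_r$. If $f\in\Sigma(X,\mathcal{P})$ and there is a companion of $\overline{f}$ in the subsemigroup generated by $S(X,\mathcal{P})\cup\mathcal{B}$, then $f$ lies in the subsemigroup generated by $S(X,\mathcal{P})\cup\mathcal{B}\cup\mathcal{C}$.
   Context: Maps are written on the right and composed left to right. $T(X,\mathcal{P})$ is the semigroup of maps $f:X\to X$ mapping each block of $\mathcal{P}$ into some block; $S(X,\mathcal{P})$ is its group of units; $\Sigma(X,\mathcal{P})$ is the set of $f\in T(X,\mathcal{P})$ whose image intersects every block. For $f\in T(X,\mathcal{P})$, $\overline{f}$ is the map on $\{1,\ldots,n\}$ with $(i)\overline{f}=j$ whenever $P_if\subseteq P_j$ (for $f\in\Sigma(X,\mathcal{P})$ this is a permutation). For $i\le r-1$, $\mathcal{B}_i$ is the set of $f\in\Sigma(X,\mathcal{P})$ for which there are blocks $P_j,P_{j'},P_k,P_{k'}$ (possibly $j=j'$ or $k=k'$) with $|P_j|=|P_{j'}|=l_i$, $|P_k|=|P_{k'}|=l_{i+1}$, such that $f$ maps $P_j$ injectively into $P_k$, maps $P_{k'}$ onto $P_{j'}$, and maps every other block bijectively onto a block of the same size; $\mathcal{B}=\bigcup_{i=1}^{r-1}\mathcal{B}_i$. For $i\le r$, $\mathcal{C}_i$ is the set of $f\in\Sigma(X,\mathcal{P})$ mapping each block into a block of the same size, such that one block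 of size $l_i$ has image of size $l_i-1$ and all other blocks are mapped injectively; $\mathcal{C}=\bigcup_{i=1}^r\mathcal{C}_i$. For a permutation $\pi$ of $\{1,\ldots,n\}$, a companion of $\pi$ is a $g\in\Sigma(X,\mathcal{P})$ with $\overline{g}=\pi$ such that $g|_{P_i}:P_i\to P_{(i)\pi}$ is injective whenever $|P_i|\le|P_{(i)\pi}|$ and surjective whenever $|P_i|\ge|P_{(i)\pi}|$. *)

(* Defs.v *)
From HB Require Import structures.
From mathcomp Require Import all_boot all_order all_fingroup.
Set Implicit Arguments. Unset Strict Implicit. Unset Printing Implicit Defensive.

Section Defs.
Variables (X : finType) (n : nat) (P : 'I_n -> {set X}).

Definition is_partition : Prop :=
  [/\ forall i, P i != set0,
      forall i j, i != j -> [disjoint P i & P j] &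
      forall x : X, exists i, x \in P i].

(* maps are written on the right: (x)(f g) = ((x)f)g *)
Definition compr (f g : {ffun X -> X}) : {ffun X -> X} := [ffun x => g (f x)].

Definition inT (f : {ffun X -> X}) : Prop :=
  forall i, exists j, f @: P i \subset P j.

Definition inS (f : {ffun X -> X}) : Prop :=
  inT f /\ exists g, inT g /\ compr f g = [ffun x => x] /\ compr g f = [ffun x => x].

Definition inSigma (f : {ffun X -> X}) : Prop :=
  inT f /\ forall j, exists x, f x \in P j.

(* distinct block sizes l_1 < ... < l_r (0-indexed here: sizes`_0 < ...) *)
Definition sizes : seq nat := sort leq (undup [seq #|P i| | i <- enum 'I_n]).

(* B_i (0-indexed: uses nth 0 sizes i and sizes`_(i+1)) *)
Definition inB_i (i : nat) (f : {ffun X -> X}) : Prop :=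
  inSigma f /\
  exists j j' k k' : 'I_n,
    [/\ #|P j| = nth 0 sizes i /\ #|P j'| = nth 0 sizes i,
        #|P k| = nth 0 sizes i.+1 /\ #|P k'| = nth 0 sizes i.+1,
        (f @: P j \subset P k /\ {in P j &, injective f}),
        f @: P k' = P j' &
        forall m, m != j -> m != k' ->
          exists m', #|P m'| = #|P m| /\ f @: P m = P m' /\ {in P m &, injective f}].

Definition inB (f : {ffun X -> X}) : Prop :=
  exists i, i.+1 < size sizes /\ inB_i i f.

Definition inC_i (i : nat) (f : {ffun X -> X}) : Prop :=
  inSigma f /\
  (forall m, exists m', #|P m'| = #|P m| /\ f @: P m \subset P m') /\
  exists j, [/\ #|P j| = nth 0 sizes i, #|f @: P j| = nth 0 sizes i - 1 &
                forall m, m != j -> {in P m &, injective f}].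

Definition inC (f : {ffun X -> X}) : Prop :=
  exists i, i < size sizes /\ inC_i i f.

Definition companion (pi : {perm 'I_n}) (g : {ffun X -> X}) : Prop :=
  inSigma g /\
  forall i, [/\ g @: P i \subset P (pi i),
               #|P i| <= #|P (pi i)| -> {in P i &, injective g} &
               #|P i| >= #|P (pi i)| -> g @: P i = P (pi i)].

End Defs.

Inductive gen (X : finType) (A : {ffun X -> X} -> Prop) : {ffun X -> X} -> Prop :=
  | gen_base f : A f -> gen A f
  | gen_mul f g : gen A f -> gen A g -> gen A (compr f g).

(* Main.v *)
Require Import Defs.
From mathcomp Require Import all_boot all_order all_fingroup.
From mathcomp Require Import zify.
Set Implicit Arguments. Unset Strict Implicit. Unset Printing Implicit Defensive.

Lemma part_uniq (X : finType) (n : nat) (P : 'I_n -> {set X}) (hP : is_partition P)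
  x i j : x \in P i -> x \in P j -> i = j.
Proof.
case: hP => _ hd _ xi xj; apply/eqP; apply/negPn/negP => /hd /disjointFr /(_ xi).
by rewrite xj.
Qed.

Lemma gen_mono (X : finType) (A B : {ffun X -> X} -> Prop) :
  (forall h, A h -> B h) -> forall f, gen A f -> gen B f.
Proof. move=> AB f; elim=> [h /AB|h k _ ? _ ?]; [exact: gen_base|exact: gen_mul]. Qed.

Lemma size_in_sizes (X : finType) (n : nat) (P : 'I_n -> {set X}) i :
  #|P i| \in sizes P.
Proof. by rewrite /sizes mem_sort mem_undup; apply/mapP; exists i; rewrite ?mem_enum. Qed.

Lemma bp_inS (X : finType) (n : nat) (P : 'I_n -> {set X}) (hP : is_partition P)
  (h : {ffun X -> X}) : (forall i x, x \in P i -> h x \in P i) -> injective h -> inS P h.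
Proof.
move=> bp inj.
have inTb : forall k : {ffun X -> X}, (forall i x, x \in P i -> k x \in P i) -> inT P k.
  move=> k bk i; exists i; apply/subsetP => y /imsetP [x xi ->]; exact: bk.
split; first exact: inTb.
exists [ffun y => invF inj y]; split; last split.
- apply: inTb => i y yi; rewrite ffunE.
  have [_ _ /(_ (invF inj y)) [j hj]] := hP.
  have := bp _ _ hj; rewrite f_invF => yj.
  by rewrite (part_uniq hP yi yj).
- by apply/ffunP => x; rewrite !ffunE invF_f.
- by apply/ffunP => x; rewrite !ffunE f_invF.
Qed.

Lemma elem_inC (X : finType) (n : nat) (P : 'I_n -> {set X}) (hP : is_partition P)
  (i : 'I_n) (c d : X) : c \in P i -> d \in P i -> c != d ->
  inC P [ffun x => if x == c then d else x].
Proof.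
move=> ci di cd; set e := [ffun x => _].
have bp : forall m x, x \in P m -> e x \in P m.
  move=> m x xm; rewrite ffunE; case: eqP => // xc; subst x.
  by rewrite (part_uniq hP xm ci).
exists (index #|P i| (sizes P)); split; first by rewrite index_mem size_in_sizes.
rewrite /inC_i nth_index ?size_in_sizes //.
split; [split|split].
- move=> m; exists m; apply/subsetP => y /imsetP [x xm ->]; exact: bp.
- move=> j; have [hne _ _] := hP; have /set0Pn [y yj] := hne j.
  case: (y =P c) => yc.
  + exists c; rewrite ffunE eqxx; subst y; by rewrite (part_uniq hP yj ci).
  + by exists y; rewrite ffunE; move/eqP/negbTE: yc => ->.
- move=> m; exists m; split => //; apply/subsetP => y /imsetP [x xm ->]; exact: bp.
exists i; split => //.
- have -> : e @: P i = P i :\ c.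
    apply/setP => y; rewrite in_setD1; apply/imsetP/andP.
    + case=> x xi ->; rewrite ffunE. case: (x =P c) => [xc|xc].
      * split; [by apply/eqP => dc; move: cd; rewrite dc eqxx|done].
      * by split=> //; apply/eqP.
    + case=> yc yi; exists y => //; rewrite ffunE; by move/negbTE: yc => ->.
  by rewrite (cardsD1 c (P i)) ci add1n subSS subn0.
- move=> m mi x y xm ym; rewrite !ffunE.
  have nc : forall z, z \in P m -> (z == c) = false.
    move=> z zm; apply/eqP => zc; subst z; by move: mi; rewrite (part_uniq hP zm ci) eqxx.
  by rewrite !nc.
Qed.

Lemma bp_gen (X : finType) (n : nat) (P : 'I_n -> {set X}) (hP : is_partition P)
  (h : {ffun X -> X}) : (forall i x, x \in P i -> h x \in P i) ->
  gen (fun h => inS P h \/ inB P h \/ inC P h) h.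
Proof.
move: {2}(#|X| - #|h @: setT|) (leqnn (#|X| - #|h @: setT|)) => k.
elim: k h => [|k IH] h hk bp.
- apply: gen_base; left; apply: bp_inS => //.
  have : {in setT &, injective h}.
    apply/imset_injP; rewrite cardsT eqn_leq max_card /=.
    by rewrite leqn0 subn_eq0 in hk.
  by move=> hi x y; apply: hi; rewrite in_setT.
have [inj|ninj] := boolP (injectiveb h).
  by apply: gen_base; left; apply: bp_inS => //; apply/injectiveP.
have [a [b [hab ab]]] : exists a b, h a = h b /\ a != b.
  case/injectivePn: ninj => a [b ab hab]; by exists a, b.
have [_ _ /(_ a) [i ai]] := hP.
have bi : b \in P i.
  have [_ _ /(_ b) [j bj]] := hP.
  by have := bp _ _ bj; rewrite -hab => /(part_uniq hP (bp _ _ ai)) ->.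
have : h @: P i \proper P i.
  rewrite properEcard; apply/andP; split.
    by apply/subsetP => y /imsetP [x xi ->]; exact: bp.
  rewrite ltn_neqAle; apply/andP; split.
    apply/negP => /imset_injP hinj; by move: ab; rewrite (hinj _ _ ai bi hab) eqxx.
  exact: leq_imset_card.
case/properP => _ [c ci cni].
have cnh : forall x, h x != c.
  move=> x; apply/eqP => hxc.
  have [_ _ /(_ x) [j xj]] := hP.
  have := bp _ _ xj; rewrite hxc => cj.
  rewrite (part_uniq hP cj ci) in xj; by move/negP: cni; apply; apply/imsetP; exists x.
set h' := [ffun x => if x == a then c else h x].
have -> : h = compr h' [ffun x => if x == c then h a else x].
  apply/ffunP => x; rewrite /h' !ffunE; have [->|xa] := eqVneq x a; first by rewrite !eqxx.
  by rewrite (negbTE (cnh x)).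
apply: gen_mul; last first.
  apply: gen_base; right; right; apply: (elem_inC hP ci (bp _ _ ai)).
  by rewrite eq_sym cnh.
apply: IH.
- have sub : h @: setT \proper h' @: setT.
    apply/properP; split.
      apply/subsetP => y /imsetP [x _ ->]; case: (x =P a) => [->|xa].
        by rewrite hab; apply/imsetP; exists b => //; rewrite ffunE eq_sym (negbTE ab).
      by apply/imsetP; exists x => //; rewrite ffunE; move/eqP/negbTE: xa => ->.
    exists c; first by apply/imsetP; exists a => //; rewrite ffunE eqxx.
    by apply/imsetP => -[x _ /esym/eqP]; rewrite (negbTE (cnh x)).
  have := proper_card sub; move: hk; lia.
- move=> m x xm; rewrite ffunE; case: eqP => [xa|_]; last exact: bp.
  by subst x; rewrite (part_uniq hP xm ai).
Qed.

Unset Implicit Arguments.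
Set Strict Implicit.
Theorem lemma4p3 (X : finType) (n : nat) (P : 'I_n -> {set X})
  (hX : 0 < #|X|)
  (hP : is_partition P)
  (hord : forall i j : 'I_n, (i <= j)%N -> #|P i| <= #|P j|)
  (f : {ffun X -> X}) (hf : inSigma P f)
  (fbar : {perm 'I_n}) (hfbar : forall i, f @: P i \subset P (fbar i))
  (hcomp : exists g, companion P fbar g /\
             gen (fun h => inS P h \/ inB P h) g) :
  gen (fun h => inS P h \/ inB P h \/ inC P h) f.
Proof.
case: hcomp => g [[_ hg] gg].
have fin : forall i x, x \in P i -> f x \in P (fbar i).
  by move=> i x xi; apply: (subsetP (hfbar i)); apply/imsetP; exists x.
have gin : forall i x, x \in P i -> g x \in P (fbar i).
  move=> i x xi; have [/subsetP s _ _] := hg i; by apply: s; apply/imsetP; exists x.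
have pk : forall x i, x \in P i -> [pick j | x \in P j] = Some i.
  move=> x i xi; case: pickP => [j xj|/(_ i)]; last by rewrite xi.
  by rewrite (part_uniq hP xj xi).
set h1 := [ffun x => if [pick j | x \in P j] is Some i then
             (if #|P (fbar i)| <= #|P i| then odflt x [pick x' in P i | g x' == f x] else x)
           else x].
set h2 := [ffun y => if [pick k | y \in P k] is Some k then
             (if #|P ((fbar^-1)%g k)| < #|P k| then
                (if [pick x in P ((fbar^-1)%g k) | g x == y] is Some x then f x else y)
              else y)
           else y].
have -> : f = compr (compr h1 g) h2.
  apply/ffunP => x; have [_ _ /(_ x) [i xi]] := hP.
  rewrite /h1 /h2 !ffunE (pk _ _ xi).
  case: leqP => le.
  - have [_ _ /(_ le) eqim] := hg i.
    have : f x \in g @: P i by rewrite eqim; exact: fin.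
    case/imsetP => x0 x0i fx0.
    have [x' [x'i gx' ->]] : exists x', [/\ x' \in P i, g x' = f x &
        [pick x' in P i | g x' == f x] = Some x'].
      case: pickP => [x' /andP [x'i /eqP gx'] | /(_ x0)]; last by rewrite x0i fx0 eqxx.
      by exists x'.
    rewrite /= gx' (pk _ _ (fin _ _ xi)) permK ltnNge le /=.
    done.
  - rewrite (pk _ _ (gin _ _ xi)) permK le.
    case: (pickP [pred x' in P i | g x' == g x]) => [x' /andP [x'i /eqP gx'] | /(_ x)]; last by rewrite /= xi eqxx.
    have [_ inj _] := hg i.
    by rewrite (inj (ltnW le) _ _ x'i xi gx').
apply: gen_mul; first apply: gen_mul.
- apply: (bp_gen hP) => i x xi; rewrite ffunE (pk _ _ xi).
  case: leqP => _ //; case: pickP => [x' /andP [] //|] /=; done.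
- by apply: gen_mono gg => h [] ?; [left|right; left].
- apply: (bp_gen hP) => k y yk; rewrite ffunE (pk _ _ yk).
  case: ltnP => _ //; case: pickP => [x' /andP [x'i _]|] //.
  by have := fin _ _ x'i; rewrite permKV.
Qed.
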